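(* Let $K\ge3$, $p\in(0,1)$ and $f\in\mathcal M_p$ with $\sigma_f$ the identity. Then for every $r\in\{2,\dots,K-1\}$, $$\sum_{i=1}^{r-1}\Big(f([K-r+1]\mid[K-i+1])-(K-r+1)\,f(K-r+2\mid[K-i+1])\Big)D(f,i)=1,$$ and consequently $$D(f,r)=\frac{1-\sum_{i=1}^{r-1}\big(f([K-r]\mid[K-i+1])-(K-r)f(K-r+1\mid[K-i+1])\big)D(f,i)}{1-(K-r+1)f(K-r+1\mid[K-r+1])}.$$
   Context: Items are $[K]=\{1,\dots,K\}$, $\mathcal S=\{S\subseteq[K]:|S|\ge2\}$, $[n]=\{1,\dots,n\}$. A preference $f$ is a family of numbers $f(i\mid S)$, $S\in\mathcal S$, $i\in[K]$; for $S'\subseteq S$, $f(S'\mid S)=\sum_{i\in S'}f(i\mid S)$. For $p\in(0,1)$, $\mathcal M_p$ consists of all $f$ with (i) $f(i\mid S)>0$ iff $i\in S$; (ii) $\sum_{i\in S}f(i\mid S)=1$; (iii) a bijection $\sigma_f:[K]\to[K]$ such that $f(i\mid S)\le pf(i'\mid S)$ for $i,i'\in S$ with $\sigma_f(i')<\sigma_f(i)$. Define $\Delta^i_{K-r+1}=f(K-r+1\mid[K-i+1])-f(K-r+2\mid[K-i+1])$ for $r\in[K-1]$, $i\in[r-1]$; $D(f,1)=\frac{1}{1-Kf(K\mid[K])}$; for $r\in\{2,\dots,K-1\}$, $D(f,r)=\frac{(K-r+1)\sum_{i=1}^{r-1}\Delta^i_{K-r+1}D(f,i)}{1-(K-r+1)f(K-r+1\mid[K-r+1])}$.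 *)

(* Defs.v *)
From HB Require Import structures.
From mathcomp Require Import all_boot all_order all_algebra.
Set Implicit Arguments. Unset Strict Implicit. Unset Printing Implicit Defensive.
Import Order.TTheory GRing.Theory Num.Theory.
Local Open Scope ring_scope.

(* Items 1..K are represented by the ordinals 1..K of 'I_K.+1; the ordinal 0
   is a dummy that never belongs to an admissible set. *)

Definition kpref (K m : nat) : {set 'I_K.+1} := [set i : 'I_K.+1 | (0 < i)%N && (i <= m)%N].

Definition admissible (K : nat) (S : {set 'I_K.+1}) : bool :=
  (S \subset kpref K K) && (2 <= #|S|)%N.

Section Pref.
Variable R : realFieldType.
Variable K : nat.
Variable f : {set 'I_K.+1} -> 'I_K.+1 -> R.

Definition fset_pref (S' S : {set 'I_K.+1}) : R := \sum_(i in S') f S i.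

Definition in_Mp_sigma (p : R) (sigma : nat -> nat) : Prop :=
  [/\ {in [pred i : nat | (0 < i <= K)%N] &, injective sigma},
      (forall i : nat, (0 < i <= K)%N -> (0 < sigma i <= K)%N),
      (forall S, admissible S -> forall i : 'I_K.+1, (0 < i)%N ->
          (0 < f S i) = (i \in S)),
      (forall S, admissible S -> \sum_(i in S) f S i = 1) &
      (forall S, admissible S -> forall i i' : 'I_K.+1, i \in S -> i' \in S ->
          (sigma i' < sigma i)%N -> f S i <= p * f S i')].

Definition in_Mp (p : R) : Prop := exists sigma, in_Mp_sigma p sigma.

Definition fp (j m : nat) : R := f (kpref K m) (inord j).

(* D(f,r): Dlist r = [:: D(f,1); ...; D(f,r)] *)
Fixpoint Dlist (r : nat) : seq R :=
  match r with
  | 0 => [::]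
  | n.+1 =>
    let l := Dlist n in
    let d :=
      if n is 0 then (1 - K%:R * fp K K)^-1
      else ((K - n)%:R *
              \sum_(1 <= i < n.+1) (fp (K - n) (K - i + 1) - fp (K - n + 1) (K - i + 1))
                                   * nth 0 l i.-1)
           / (1 - (K - n)%:R * fp (K - n) (K - n))
    in rcons l d
  end.

Definition D (r : nat) : R := nth 0 (Dlist r) r.-1.

End Pref.

(* Main.v *)
Require Import Defs.
From HB Require Import structures.
From mathcomp Require Import all_boot all_order all_algebra zify ring lra.
Import Order.TTheory GRing.Theory Num.Theory.
Local Open Scope ring_scope.
Set Implicit Arguments. Unset Strict Implicit.
Lemma in_kpref K m (j : nat) : (j <= K)%N ->
  (@inord K j \in kpref K m) = (0 < j <= m)%N.
Proof. by move=> hj; rewrite inE inordK. Qed.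
Lemma kpref_sum (R : realFieldType) K (F : 'I_K.+1 -> R) m : (m <= K)%N ->
  \sum_(j in kpref K m) F j = \sum_(1 <= j < m.+1) F (inord j).
Proof.
elim: m => [_|m IH hm].
  rewrite big_geq //. rewrite big_pred0 // => i; rewrite inE. 
  by case: (nat_of_ord i) => [|n]; rewrite ?andbF.
have -> : kpref K m.+1 = inord m.+1 |: kpref K m.
  apply/setP => i; rewrite !inE -val_eqE /= inordK //.
  by rewrite [(i <= m.+1)%N]leq_eqVlt ltnS; case: eqP => [->|].
rewrite big_setU1; last by rewrite in_kpref // ltnn.
rewrite [RHS]big_nat_recr // IH ?(ltnW hm) //; exact: addrC.
Qed.

Lemma size_Dlist (R : realFieldType) K (f : {set 'I_K.+1} -> 'I_K.+1 -> R) n :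
  size (Dlist f n) = n.
Proof.
elim: n => [//|n IH].
have [d ->] : exists d, Dlist f n.+1 = rcons (Dlist f n) d by eexists; reflexivity.
by rewrite size_rcons IH.
Qed.

Lemma nth_Dlist (R : realFieldType) K (f : {set 'I_K.+1} -> 'I_K.+1 -> R) n i :
  (0 < i <= n)%N -> nth 0 (Dlist f n) i.-1 = D f i.
Proof.
elim: n => [|n IH] hi; first by case/andP: hi => a b; rewrite leqn0 in b; rewrite (eqP b) in a.
case: (ltnP i n.+1) => h.
  have [d E] : exists d, Dlist f n.+1 = rcons (Dlist f n) d by eexists; reflexivity.
  rewrite E nth_rcons size_Dlist (_ : (i.-1 < n)%N = true) ?IH //; lia.
have -> : i = n.+1 by lia.
by [].
Qed.

Lemma D1 (R : realFieldType) K (f : {set 'I_K.+1} -> 'I_K.+1 -> R) :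
  D f 1 = (1 - K%:R * fp f K K)^-1.
Proof. by []. Qed.

Lemma DSS (R : realFieldType) K (f : {set 'I_K.+1} -> 'I_K.+1 -> R) n :
  D f n.+2 = ((K - n.+1)%:R *
              \sum_(1 <= i < n.+2) (fp f (K - n.+1) (K - i + 1) - fp f (K - n.+1 + 1) (K - i + 1))
                                   * nth 0 (Dlist f n.+1) i.-1)
           / (1 - (K - n.+1)%:R * fp f (K - n.+1) (K - n.+1)).
Proof.
rewrite /D.
have -> : Dlist f n.+2 = rcons (Dlist f n.+1) (((K - n.+1)%:R *
              \sum_(1 <= i < n.+2) (fp f (K - n.+1) (K - i + 1) - fp f (K - n.+1 + 1) (K - i + 1))
                                   * nth 0 (Dlist f n.+1) i.-1)
           / (1 - (K - n.+1)%:R * fp f (K - n.+1) (K - n.+1))) by reflexivity.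
by rewrite nth_rcons size_Dlist ltnn eqxx.
Qed.

Lemma D_rec (R : realFieldType) K (f : {set 'I_K.+1} -> 'I_K.+1 -> R) r :
  (2 <= r <= K)%N ->
  D f r = ((K - r + 1)%:R * \sum_(1 <= i < r)
      (fp f (K - r + 1) (K - i + 1) - fp f (K - r + 2) (K - i + 1)) * D f i)
    / (1 - (K - r + 1)%:R * fp f (K - r + 1) (K - r + 1)).
Proof.
case: r => [|[|n]] hr; try lia.
rewrite DSS.
have e2 : (K - n.+1 + 1 = K - n.+2 + 2)%N by lia.
have e1 : (K - n.+1 = K - n.+2 + 1)%N by lia.
rewrite e2 e1; congr (_ * _ / _).
apply: eq_big_nat => i hi; rewrite nth_Dlist //; lia.
Qed.

Lemma kpref_adm K m : (2 <= m <= K)%N -> admissible (kpref K m).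
Proof.
move=> /andP[h2 hK]; apply/andP; split.
  apply/subsetP => i; rewrite !inE => /andP[a b]; rewrite a /=; exact: leq_trans b hK.
have -> : 2%N = #|[set (@inord K 1); inord m]|.
  rewrite cards2; congr (_.+1); apply/eqP; rewrite -val_eqE /= !inordK //; try lia.
apply: subset_leq_card; apply/subsetP => i; rewrite !inE => /orP[]/eqP->;
  rewrite inordK /=; lia.
Qed.

Lemma sum_one (R : realFieldType) K (p : R) (f : {set 'I_K.+1} -> 'I_K.+1 -> R) m :
  in_Mp_sigma f p id -> (2 <= m <= K)%N -> \sum_(1 <= j < m.+1) fp f j m = 1.
Proof.
case=> _ _ _ hsum _ hm; rewrite -(hsum _ (kpref_adm hm)) kpref_sum //; lia.
Qed.

Lemma fset_split (R : realFieldType) K (f : {set 'I_K.+1} -> 'I_K.+1 -> R) a b :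
  (1 <= a <= K)%N -> (b <= K)%N ->
  fset_pref f (kpref K a) (kpref K b) = fset_pref f (kpref K a.-1) (kpref K b) + fp f a b.
Proof.
case: a => [|a] ha hb; first lia.
rewrite /fset_pref !kpref_sum /=; try lia.
by rewrite [LHS]big_nat_recr.
Qed.

Lemma term_lt (R : realFieldType) K (p : R) (f : {set 'I_K.+1} -> 'I_K.+1 -> R) j m :
  in_Mp_sigma f p id -> p < 1 -> (2 <= m <= K)%N -> (1 <= j < m)%N ->
  fp f m m < fp f j m.
Proof.
case=> _ _ hpos _ hord hp hm hj.
have hadm := kpref_adm hm.
have hjpos : 0 < fp f j m.
  rewrite /fp hpos // ?in_kpref ?inordK; lia.
have := hord _ hadm (inord m) (inord j).
rewrite !in_kpref ?inordK; try lia.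
move=> h; have {}h := h ltac:(lia) ltac:(lia) ltac:(lia).
rewrite /fp in hjpos *.
have hp' : 0 < 1 - p by rewrite subr_gt0.
have := mulr_gt0 hp' hjpos; rewrite mulrBl mul1r. move=> H; apply: (le_lt_trans h); by rewrite -subr_gt0.
Qed.

Lemma den_pos (R : realFieldType) K (p : R) (f : {set 'I_K.+1} -> 'I_K.+1 -> R) m :
  in_Mp_sigma f p id -> p < 1 -> (2 <= m <= K)%N ->
  0 < 1 - m%:R * fp f m m.
Proof.
move=> hM hp hm.
have hs := sum_one hM hm.
case: m hm hs => [|m] hm hs; first lia.
rewrite big_nat_recl in hs; last lia.
have h1 : fp f m.+1 m.+1 < fp f 1 m.+1 by apply: (term_lt hM); lia.
have h2 : \sum_(1 <= i < m.+1) fp f m.+1 m.+1 <= \sum_(1 <= i < m.+1) fp f i.+1 m.+1.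
  apply: ler_sum_nat => i hi; case: (ltnP i m) => him.
    apply/ltW; apply: (term_lt hM); lia.
  by have -> : i = m by lia.
rewrite sumr_const_nat subSS subn0 in h2.
rewrite mulr_natl mulrS.
move: h1 h2 hs; set y := fp f m.+1 m.+1 *+ m; set s := \sum_(1 <= i < m.+1) _.
move=> h1 h2 hs; lra.
Qed.

Definition Sfun (R : realFieldType) K (f : {set 'I_K.+1} -> 'I_K.+1 -> R) r :=
  \sum_(1 <= i < r)
       (fset_pref f (kpref K (K - r + 1)) (kpref K (K - i + 1))
        - (K - r + 1)%:R * fp f (K - r + 2) (K - i + 1)) * D f i.

Definition Tfun (R : realFieldType) K (f : {set 'I_K.+1} -> 'I_K.+1 -> R) r :=
  \sum_(1 <= i < r)
      (fp f (K - r + 1) (K - i + 1) - fp f (K - r + 2) (K - i + 1)) * D f i.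

Lemma step_c (R : realFieldType) K (f : {set 'I_K.+1} -> 'I_K.+1 -> R) r :
  (1 <= r <= K)%N ->
  \sum_(1 <= i < r)
     (fset_pref f (kpref K (K - r)) (kpref K (K - i + 1))
      - (K - r)%:R * fp f (K - r + 1) (K - i + 1)) * D f i
  = Sfun f r - (K - r + 1)%:R * Tfun f r.
Proof.
move=> hr; rewrite /Sfun /Tfun mulr_sumr -sumrB; apply: eq_big_nat => i hi.
rewrite (@fset_split _ _ f (K - r + 1)); try lia.
have -> : (K - r + 1).-1 = (K - r)%N by lia.
rewrite natrD; ring.
Qed.

Lemma Sstep (R : realFieldType) K (p : R) (f : {set 'I_K.+1} -> 'I_K.+1 -> R) r :
  in_Mp_sigma f p id -> (1 <= r <= K - 1)%N ->
  Sfun f r.+1 = Sfun f r - (K - r + 1)%:R * Tfun f r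
     + (1 - (K - r + 1)%:R * fp f (K - r + 1) (K - r + 1)) * D f r.
Proof.
move=> hM hr; rewrite {1}/Sfun big_nat_recr; last lia.
have e1 : (K - r.+1 + 1 = K - r)%N by lia.
have e2 : (K - r.+1 + 2 = K - r + 1)%N by lia.
rewrite e1 e2 step_c; last lia.
have hs : fset_pref f (kpref K (K - r + 1)) (kpref K (K - r + 1)) = 1.
  case: hM => _ _ _ hsum _; apply: hsum; apply: kpref_adm; lia.
rewrite (@fset_split _ _ f (K - r + 1)) in hs; try lia.
rewrite (_ : (K - r + 1).-1 = (K - r)%N) in hs; last lia.
have -> : fset_pref f (kpref K (K - r)) (kpref K (K - r + 1)) =
   1 - fp f (K - r + 1) (K - r + 1) by rewrite -hs addrK.
rewrite natrD /=; ring.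
Qed.

Lemma S_one (R : realFieldType) K (p : R) (f : {set 'I_K.+1} -> 'I_K.+1 -> R) r :
  in_Mp_sigma f p id -> p < 1 -> (3 <= K)%N -> (1 <= r <= K - 1)%N ->
  Sfun f r.+1 = 1.
Proof.
move=> hM hp hK; elim: r => [|r IH] hr; first lia.
have hden : 1 - (K - r.+1 + 1)%:R * fp f (K - r.+1 + 1) (K - r.+1 + 1) != 0.
  by rewrite gt_eqF // (den_pos hM hp); lia.
rewrite (Sstep hM); last lia.
case: r IH hr hden => [|r] IH hr hden.
  rewrite /Sfun /Tfun !big_geq // D1.
  rewrite (_ : (K - 1 + 1 = K)%N) in hden *; last lia.
  rewrite mulr0 subr0 add0r mulfV //.
rewrite IH; last lia.
rewrite (D_rec f (r := r.+2)); last lia.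
rewrite -/(Tfun f r.+2).
field; by rewrite natr1 -addn1.
Qed.

Unset Implicit Arguments. Set Strict Implicit.
Theorem mainTheorem7 (R : realFieldType) (K : nat) (p : R)
  (f : {set 'I_K.+1} -> 'I_K.+1 -> R) :
  (3 <= K)%N -> 0 < p < 1 -> in_Mp_sigma f p id ->
  forall r : nat, (2 <= r <= K - 1)%N ->
    \sum_(1 <= i < r)
       (fset_pref f (kpref K (K - r + 1)) (kpref K (K - i + 1))
        - (K - r + 1)%:R * fp f (K - r + 2) (K - i + 1)) * D f i = 1
    /\
    D f r =
      (1 - \sum_(1 <= i < r)
             (fset_pref f (kpref K (K - r)) (kpref K (K - i + 1))
              - (K - r)%:R * fp f (K - r + 1) (K - i + 1)) * D f i)
      / (1 - (K - r + 1)%:R * fp f (K - r + 1) (K - r + 1)).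
Proof.
move=> hK /andP[hp0 hp1] hM [|r] hr; first lia.
have hS : Sfun f r.+1 = 1 by apply: (S_one hM); lia.
split; first exact: hS.
have hden : 1 - (K - r.+1 + 1)%:R * fp f (K - r.+1 + 1) (K - r.+1 + 1) != 0.
  by rewrite gt_eqF // (den_pos hM hp1); lia.
rewrite step_c; last lia.
rewrite hS (D_rec f (r := r.+1)); last lia.
rewrite -/(Tfun f r.+1).
field; by rewrite natr1 -addn1.
Qed.
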